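(* Let $A$ be a synaptic algebra and let $p,q\in P$ be in generic position ($p\wedge q=p\wedge q^{\perp}=p^{\perp}\wedge q=p^{\perp}\wedge q^{\perp}=0$). Let $c:=(pqp+p^{\perp}q^{\perp}p^{\perp})^{1/2}$, $s:=(pq^{\perp}p+p^{\perp}qp^{\perp})^{1/2}$, let $u$, $v$ and $k$ be the symmetries of the polar decompositions of $p-q^{\perp}$, $p-q$ and $pqp^{\perp}+p^{\perp}qp$ respectively, and put $j:=uvp+pvu$. Then: (i) $c^{\circ}=s^{\circ}=(cs)^{\circ}=(csj)^{\circ}=1$; (ii) $uv+vu=0$; (iii) $j=k$.
   Context: Synaptic algebra (Foulis): $R$ is a real linear associative algebra with unit $1$, and $A\subseteq R$ is a real linear subspace with $1\in A$. For $a,b\in A$ write $aCb$ iff $ab=ba$; $C(a):=\{b\in A: aCb\}$; $CC(a):=\{b\in A: bCd \text{ for all } d\in C(a)\}$. $A$ is a synaptic algebra with enveloping algebra $R$ iff: (SA1) $A$ is a partially ordered archimedean real linear space with positive cone $A^+$, $1$ is an order unit, $\|\cdot\|$ the order-unit norm; (SA2) $a\in A\Rightarrow a^2\in A^+$; (SA3) $a,b\in A^+\Rightarrow aba\in A^+$; (SA4) if $a\in A$, $b\in A^+$, $aba=0$ then $ab=ba=0$; (SA5) if $a\in A^+$ there is $b\in A^+\cap CC(a)$ with $b^2=a$; (SA6) for $a\in A$ there is $p=p^2\in A$ with $ab=0\Leftrightarrow pb=0$ for all $b\in A$; (SA7) if $1\le a$ there is $b\in A$ with $ab=ba=1$; (SA8)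 if $a,b\in A$, $a_1\le a_2\le\cdots$ are pairwise commuting elements of $C(b)$ with $\|a-a_n\|\to0$, then $a\in C(b)$. $A$ is nondegenerate. Products are computed in $R$ ($c$, $s$, $j$ pairwise commute, so $cs,csj\in A$). $P:=\{p\in A:p=p^2\}$ with inherited order is an orthomodular lattice with $p^{\perp}:=1-p$, meet $\wedge$, join $\vee$. For $0\le a$, $a^{1/2}$ is its unique positive square root in $A$, $|a|:=(a^2)^{1/2}$; $a^{\circ}$ is the carrier of $a$ (the unique projection with $ab=0\Leftrightarrow a^{\circ}b=0$ for all $b\in A$). A symmetry is $u\in A$ with $u^2=1$. For $a\in A$, the signum $t$ of $a$ is the partial symmetry with $t^2=a^{\circ}$, $t\in CC(a)$, $a=|a|t=t|a|$; the symmetry of the polar decomposition of $a$ is $t+(a^{\circ})^{\perp}$. *)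

(* Defs.v *)
From HB Require Import structures.
From mathcomp Require Import all_boot all_order all_algebra.
From mathcomp Require Import boolp classical_sets reals.
Set Implicit Arguments. Unset Strict Implicit. Unset Printing Implicit Defensive.
Import Order.TTheory GRing.Theory Num.Theory.
Local Open Scope ring_scope.

Section Synaptic.
Variables (K : realType) (R : algType K).
(* A : the subspace of R, pos : the positive cone A^+ *)
Variables (A pos : R -> Prop).

Definition sle (a b : R) : Prop := pos (b - a).

Definition commA (a : R) : R -> Prop := fun b => A b /\ a * b = b * a.
Definition bicommA (a : R) : R -> Prop :=
  fun b => A b /\ forall d, commA a d -> b * d = d * b.

Definition onorm (a : R) : K :=
  inf [set l : K | 0 < l /\ sle (- l%:A) a /\ sle a l%:A].

Definition projA (p : R) : Prop := A p /\ p * p = p.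

Record synaptic : Prop := Synaptic {
  sa_sub0 : A 0;
  sa_subD : forall a b, A a -> A b -> A (a + b);
  sa_subZ : forall (l : K) a, A a -> A (l *: a);
  sa_one : A 1;
  sa_nondeg : (1 : R) <> 0;
  sa_posA : forall a, pos a -> A a;
  sa_pos0 : pos 0;
  sa_posD : forall a b, pos a -> pos b -> pos (a + b);
  sa_posZ : forall (l : K) a, 0 <= l -> pos a -> pos (l *: a);
  sa_posN : forall a, pos a -> pos (- a) -> a = 0;
  sa_archi : forall a b, A a -> A b -> (forall n : nat, sle (a *+ n) b) -> sle a 0;
  sa_unit : forall a, A a -> exists l : K, sle a l%:A;
  sa_sq : forall a, A a -> pos (a * a);
  sa_aba : forall a b, pos a -> pos b -> pos (a * b * a);
  sa_aba0 : forall a b, A a -> pos b -> a * b * a = 0 -> a * b = 0 /\ b * a = 0;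
  sa_sqrt : forall a, pos a -> exists b, pos b /\ bicommA a b /\ b * b = a;
  sa_carrier : forall a, A a -> exists p, A p /\ p * p = p /\
                 forall b, A b -> (a * b = 0 <-> p * b = 0);
  sa_inv : forall a, A a -> sle 1 a -> exists b, A b /\ a * b = 1 /\ b * a = 1;
  sa_mono : forall a b (f : nat -> R), A a -> A b ->
     (forall n, commA b (f n)) ->
     (forall m n, f m * f n = f n * f m) ->
     (forall n, sle (f n) (f n.+1)) ->
     (forall eps : K, 0 < eps -> exists N, forall n, (N <= n)%N -> onorm (a - f n) < eps) ->
     commA b a
}.

Definition is_meet (p q m : R) : Prop :=
  projA m /\ sle m p /\ sle m q /\
  forall r, projA r -> sle r p -> sle r q -> sle r m.

Definition perp (p : R) : R := 1 - p.

Definition generic (p q : R) : Prop :=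
  is_meet p q 0 /\ is_meet p (perp q) 0 /\ is_meet (perp p) q 0 /\
  is_meet (perp p) (perp q) 0.

Definition is_sqrt (a b : R) : Prop := pos b /\ b * b = a.

Definition is_carrier (a e : R) : Prop :=
  projA e /\ forall b, A b -> (a * b = 0 <-> e * b = 0).

Definition is_signum (a t : R) : Prop :=
  A t /\ (exists e, is_carrier a e /\ t * t = e) /\ bicommA a t /\
  exists ab, is_sqrt (a * a) ab /\ a = ab * t /\ a = t * ab.

Definition is_polar_sym (a u : R) : Prop :=
  exists t e, is_signum a t /\ is_carrier a e /\ u = t + perp e.

End Synaptic.

(* Main.v *)
Require Import Defs.
From HB Require Import structures.
From mathcomp Require Import all_boot all_order all_algebra.
From mathcomp Require Import boolp classical_sets reals.
Import Order.TTheory GRing.Theory Num.Theory.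
Local Open Scope ring_scope.
Set Implicit Arguments. Unset Strict Implicit.

Inductive zexpr := ZAtom of nat | ZAdd of zexpr & zexpr | ZOpp of zexpr | ZZero.

Section ZmodRefl.
Variable V : zmodType.

Fixpoint zeval (env : seq V) (e : zexpr) : V :=
  match e with
  | ZAtom n => nth 0 env n
  | ZAdd a b => zeval env a + zeval env b
  | ZOpp a => - zeval env a
  | ZZero => 0
  end.

Fixpoint zlin (env : seq V) (l : seq int) : V :=
  match l with
  | [::] => 0
  | c :: l' => head 0 env *~ c + zlin (behead env) l'
  end.

Fixpoint zaddl (l m : seq int) : seq int :=
  match l, m with
  | [::], _ => m
  | _, [::] => l
  | a :: l', b :: m' => (a + b)%R :: zaddl l' m'
  end.

Fixpoint znf (e : zexpr) : seq int :=
  match e with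
  | ZAtom n => ncons n 0%R [:: 1%R]
  | ZAdd a b => zaddl (znf a) (znf b)
  | ZOpp a => map (fun c => - c)%R (znf a)
  | ZZero => [::]
  end.

Lemma zlin_add env l m : zlin env (zaddl l m) = zlin env l + zlin env m.
Proof.
elim: l m env => [|a l IH] [|b m] env /=; rewrite ?add0r ?addr0 //.
by rewrite IH mulrzDr addrACA.
Qed.

Lemma zlin_opp env l : zlin env (map (fun c => - c)%R l) = - zlin env l.
Proof. by elim: l env => [|a l IH] env /=; rewrite ?oppr0 // IH mulrNz opprD. Qed.

Lemma zlin_nil l : zlin [::] l = 0.
Proof. by elim: l => [|a l IH] //=; rewrite IH mul0rz addr0. Qed.

Lemma zlin_atom env n : zlin env (ncons n 0%R [:: 1%R]) = nth 0 env n.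
Proof.
elim: n env => [|n IH] [|x env] /=; rewrite ?mulr1z ?mulr0z ?addr0 ?add0r ?zlin_nil ?nth_nil //.

Qed.

Lemma zeval_nf env e : zeval env e = zlin env (znf e).
Proof.
elim: e => [n|a IHa b IHb|a IHa|] /=.
- by rewrite zlin_atom.
- by rewrite zlin_add IHa IHb.
- by rewrite zlin_opp IHa.
- by [].
Qed.

Lemma zlin0 env l : all (fun c => c == 0%R) l -> zlin env l = 0.
Proof.
by elim: l env => [|a l IH] env //= /andP[/eqP -> /IH ->]; rewrite mulr0z addr0.
Qed.

Lemma zmod_sound env e1 e2 :
  all (fun c => c == 0%R) (zaddl (znf e1) (map (fun c => - c)%R (znf e2))) ->
  zeval env e1 = zeval env e2.
Proof.
move=> h; apply/eqP; rewrite -subr_eq0 !zeval_nf -zlin_opp -zlin_add.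
by rewrite zlin0.
Qed.
End ZmodRefl.
Arguments zeval {V}.

Ltac zmem x l :=
  lazymatch l with
  | nil => constr:(false)
  | cons ?y ?l' => match constr:(tt) with
                   | _ => let _ := match goal with _ => unify x y end in constr:(true)
                   | _ => zmem x l'
                   end
  end.

Ltac zcollect t env :=
  lazymatch t with
  | (?a + ?b)%R => let env' := zcollect a env in zcollect b env'
  | (- ?a)%R => zcollect a env
  | 0%R => env
  | _ => let b := zmem t env in
         lazymatch b with
         | true => env
         | false => constr:(cons t env)
         end
  end.

Ltac zindex x l :=
  lazymatch l with
  | cons ?y ?l' => match constr:(tt) with
                   | _ => let _ := match goal with _ => unify x y end in constr:(0%N)
                   | _ => let n := zindex x l' in constr:(S n)
                   end
  end.

Ltac zreify t env :=
  lazymatch t with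
  | (?a + ?b)%R => let ra := zreify a env in let rb := zreify b env in constr:(ZAdd ra rb)
  | (- ?a)%R => let ra := zreify a env in constr:(ZOpp ra)
  | 0%R => constr:(ZZero)
  | _ => let n := zindex t env in constr:(ZAtom n)
  end.

Ltac zmod :=
  lazymatch goal with
  | |- @eq ?T ?l ?r =>
    let env0 := constr:(@nil T) in
    let env1 := zcollect l env0 in
    let env := zcollect r env1 in
    let el := zreify l env in
    let er := zreify r env in
    change (zeval env el = zeval env er);
    apply: zmod_sound; vm_compute; reflexivity
  end.


Section Syn.
Variables (K : realType) (R : algType K) (A pos : R -> Prop).
Hypothesis HA : synaptic A pos.

Ltac ex := rewrite ?(mulrDl, mulrDr, mulrBl, mulrBr, mulrN, mulNr, opprK, opprD, opprB, mul1r, mulr1, mulrA).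

Lemma AD x y : A x -> A y -> A (x + y). Proof. by move=> hx hy; exact: (sa_subD HA hx hy). Qed.
Lemma AN x : A x -> A (- x).
Proof. by move=> h; rewrite -scaleN1r; apply: (sa_subZ HA). Qed.
Lemma AB x y : A x -> A y -> A (x - y).
Proof. by move=> hx hy; apply: AD => //; apply: AN. Qed.
Lemma A1 : A 1. Proof. exact: (sa_one HA). Qed.
Lemma posA x : pos x -> A x. Proof. by move=> h; exact: (sa_posA HA h). Qed.
Lemma Asq x : A x -> A (x * x). Proof. by move=> h; apply/posA/(sa_sq HA). Qed.
Lemma pos1 : pos 1. Proof. by rewrite -(mulr1 1); apply: (sa_sq HA); exact: A1. Qed.
Lemma Ajord x y : A x -> A y -> A (x * y + y * x).
Proof.
move=> hx hy.
have -> : x * y + y * x = (x + y) * (x + y) - x * x - y * y by ex; zmod.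
by apply: AB; [apply: AB|]; apply: Asq => //; apply: AD.
Qed.
Lemma Axyx x y : A x -> A y -> A (x * y * x).
Proof.
move=> hx hy.
have h : A (x * (x * y + y * x) + (x * y + y * x) * x - (x * x * y + y * (x * x))).
  by apply: AB; apply: Ajord => //; [apply: Ajord|apply: Asq].
have e : x * (x * y + y * x) + (x * y + y * x) * x - (x * x * y + y * (x * x))
   = x * y * x + x * y * x by ex; zmod.
have := sa_subZ HA (2^-1) h; rewrite e -mulr2n -scaler_nat scalerA mulVf ?scale1r //.
by rewrite pnatr_eq0.
Qed.
Lemma Atrip x y z : A x -> A y -> A z -> A (x * y * z + z * y * x).
Proof.
move=> hx hy hz.
have -> : x * y * z + z * y * x = (x + z) * y * (x + z) - x * y * x - z * y * z by ex; zmod.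
by apply: AB; [apply: AB|]; apply: Axyx => //; apply: AD.
Qed.
Lemma sq0 x : A x -> x * x = 0 -> x = 0.
Proof.
move=> hx h; have h2 : x * 1 * x = 0 by rewrite mulr1.
have [h1 _] := sa_aba0 HA hx pos1 h2.
by rewrite -(mulr1 x).
Qed.
Lemma posN0 x : pos x -> pos (- x) -> x = 0.
Proof. by move=> h1 h2; exact: (sa_posN HA h1 h2). Qed.
Lemma projpos e : A e -> e * e = e -> pos e.
Proof. by move=> h he; rewrite -he; apply: (sa_sq HA). Qed.

Lemma pos_comm_conj z d : pos z -> A d -> d * z = z * d -> pos (d * z * d).
Proof.
move=> pz hd dz.
have [w [pw [[Aw bw] ww]]] := sa_sqrt HA pz.
have wd : w * d = d * w by apply: bw; split.
have -> : d * z * d = w * (d * d) * w.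
  have e1 : d * (w * w) * d = (d * w) * (w * d) by rewrite !mulrA.
  have e2 : w * (d * d) * w = (w * d) * (d * w) by rewrite !mulrA.
  by rewrite -ww e1 e2 wd.
by apply: (sa_aba HA) => //; apply: (sa_sq HA).
Qed.


Lemma sqrt_eq_root x r : pos x -> pos r -> bicommA A (x * x) r -> r * r = x * x -> x = r.
Proof.
move=> px pr [Ar br] rr.
have Ax := posA px.
have xr : r * x = x * r by apply: br; split => //; rewrite mulrA.
pose d := x - r.
have Ad : A d by apply: AB.
have dx : d * x = x * d by rewrite /d mulrBl mulrBr xr.
have dr : d * r = r * d by rewrite /d mulrBl mulrBr xr.
have hsum : d * x * d + d * r * d = 0.
  have h : d * (x + r) = 0 by rewrite /d mulrBl !mulrDr rr xr; zmod.
  by rewrite -mulrDl -mulrDr h mul0r.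
have p1 := pos_comm_conj px Ad dx.
have p2 := pos_comm_conj pr Ad dr.
have h' : d * x * d = - (d * r * d) by apply/eqP; rewrite -addr_eq0 hsum.
have e0 : d * x * d = 0 by apply: posN0 => //; rewrite h' opprK.
have e1 : d * r * d = 0 by apply/eqP; rewrite -oppr_eq0 -h' e0.
have [dx0 _] := sa_aba0 HA Ad px e0.
have [dr0 _] := sa_aba0 HA Ad pr e1.
have : d * d = 0 by rewrite {2}/d mulrBr dx0 dr0 subrr.
by move/(sq0 Ad)/subr0_eq.
Qed.

Lemma sqrt_unique x y : pos x -> pos y -> x * x = y * y -> x = y.
Proof.
move=> px py xy.
have [r [pr [br rr]]] := sa_sqrt HA (sa_sq HA (posA px)).
have -> := sqrt_eq_root px pr br rr.
rewrite xy in br rr.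
by have -> := sqrt_eq_root py pr br rr.
Qed.

Lemma root_comm x d : pos x -> A d -> (x * x) * d = d * (x * x) -> x * d = d * x.
Proof.
move=> px Ad h.
have [r [pr [br rr]]] := sa_sqrt HA (sa_sq HA (posA px)).
have -> := sqrt_eq_root px pr br rr.
by apply: br.2; split.
Qed.

Lemma pos_mulC x y : pos x -> pos y -> x * y = y * x -> pos (x * y).
Proof.
move=> px py xy.
have [w [pw [[Aw bw] ww]]] := sa_sqrt HA px.
have wy : w * y = y * w by apply: bw; split => //; exact: posA.
by rewrite -ww -mulrA wy mulrA; apply: (sa_aba HA).
Qed.

Lemma carrier_right m e z : A m -> A e -> e * e = e ->
  (forall b, A b -> m * b = 0 <-> e * b = 0) -> A z -> z * m = 0 -> z * e = 0.
Proof.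
move=> Am Ae ee he Az hz.
have h1 : m * (z * z) * m = 0 by rewrite !mulrA -(mulrA (m * z) z m) hz mulr0.
have [h2 _] := sa_aba0 HA Am (sa_sq HA Az) h1.
have h3 : e * (z * z) = 0 by apply/(he _ (Asq Az)).
have h4 : (z * e * z) * (z * e * z) = 0.
  by rewrite !mulrA -(mulrA (z * e) z z) -(mulrA z e (z * z)) h3 mulr0 !mul0r.
have h5 := sq0 (Axyx Az Ae) h4.
by have [h6 _] := sa_aba0 HA Az (projpos Ae ee) h5.
Qed.

Lemma meet_kill p g r x : projA A p -> projA A g -> is_meet A pos p r 0 -> r = 1 - g ->
  A x -> p * g * p * x = 0 -> p * x = 0.
Proof.
move=> [Ap pp] [Ag gg] [_ [_ [_ Hm]]] Hr Ax h; subst r.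
pose y := p * (x * x) * p.
have Ay : A y := Axyx Ap (Asq Ax).
have hpy : p * y = y by rewrite /y !mulrA pp.
have hyp : y * p = y by rewrite /y -mulrA pp.
have hyg : y * g * y = 0.
  have -> : y * g * y = p * x * x * (p * g * p * x) * x * p by rewrite /y !mulrA.
  by rewrite h mulr0 !mul0r.
have [yg gy] := sa_aba0 HA Ay (projpos Ag gg) hyg.
have [e [Ae [ee he]]] := sa_carrier HA Ay.
have A1p : A (1 - p) by apply: AB => //; exact: A1.
have ep : e * (1 - p) = 0 by apply/he => //; rewrite mulrBr mulr1 hyp subrr.
have pe : (1 - p) * e = 0.
  by apply: (carrier_right Ay Ae ee he A1p); rewrite mulrBl mul1r hpy subrr.
have eg : e * g = 0 by apply/he.
have ge : g * e = 0 by apply: (carrier_right Ay Ae ee he Ag).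
have e1 : e * p = e by apply/eqP; rewrite eq_sym -subr_eq0 -[X in X - _]mulr1 -mulrBr ep.
have e2 : p * e = e by apply/eqP; rewrite eq_sym -subr_eq0 -[X in X - _]mul1r -mulrBl pe.
have Hep : sle pos e p.
  apply: projpos; first by apply: AB.
  by ex; rewrite pp ee e1 e2; zmod.
have Heg : sle pos e (1 - g).
  apply: projpos; first by apply: AB => //; apply: AB => //; exact: A1.
  by ex; rewrite gg ee eg ge; zmod.
have He0 := Hm e (conj Ae ee) Hep Heg.
rewrite /sle sub0r in He0.
have e0 : e = 0 := posN0 (projpos Ae ee) He0.
have y0 : y = 0 by rewrite -(mulr1 y); apply/(he _ A1); rewrite e0 mul0r.
have : (x * p * x) * (x * p * x) = 0.
  have -> : (x * p * x) * (x * p * x) = x * y * x by rewrite /y !mulrA.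
  by rewrite y0 mulr0 !mul0r.
move/(sq0 (Axyx Ax Ap)) => xpx.
by have [_ ->] := sa_aba0 HA Ax (projpos Ap pp) xpx.
Qed.

Lemma carrier_one a e : (forall y, A y -> a * y = 0 -> y = 0) -> is_carrier A a e -> e = 1.
Proof.
move=> inj [[Ae ee] he].
have A1e : A (1 - e) by apply: AB => //; exact: A1.
have : a * (1 - e) = 0 by apply/he => //; rewrite mulrBr mulr1 ee subrr.
by move/(inj _ A1e)/subr0_eq.
Qed.

Lemma polar_inj a u : (forall y, A y -> a * y = 0 -> y = 0) -> is_polar_sym A pos a u ->
  exists r, [/\ pos r, r * r = a * a, a = r * u, a = u * r & [/\ u * u = 1, A u & bicommA A a u]].
Proof.
move=> inj [t [e [[At [[e' [ce' tt]] [bt [ab [[pab abab] [h1 h2]]]]]] [ce ->]]]].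
rewrite (carrier_one inj ce) /perp subrr addr0.
rewrite (carrier_one inj ce') in tt.
by exists ab; split.
Qed.

End Syn.

Section Comm.
Variable R : ringType.
Lemma commM (x y z : R) : x * z = z * x -> y * z = z * y -> (x * y) * z = z * (x * y).
Proof. by move=> hx hy; rewrite -mulrA hy mulrA hx -mulrA. Qed.
Lemma commD (x y z : R) : x * z = z * x -> y * z = z * y -> (x + y) * z = z * (x + y).
Proof. by move=> hx hy; rewrite mulrDl mulrDr hx hy. Qed.
Lemma commB (x y z : R) : x * z = z * x -> y * z = z * y -> (x - y) * z = z * (x - y).
Proof. by move=> hx hy; rewrite mulrBl mulrBr hx hy. Qed.
Lemma sq_comm (x y : R) : y * x = x * y -> y * y = 1 -> (x * y) * (x * y) = x * x.
Proof. by move=> hyx hyy; rewrite -mulrA (mulrA y x y) hyx -mulrA hyy mulr1. Qed.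
Lemma comm1 (z : R) : 1 * z = z * 1.
Proof. by rewrite mul1r mulr1. Qed.
End Comm.

Ltac ex := rewrite ?(mulrDl, mulrDr, mulrBl, mulrBr, mulrN, mulNr, opprK, opprD, opprB, mul1r, mulr1, mulrA).

Unset Implicit Arguments.
Theorem lemma7p7 (K : realType) (R : algType K) (A pos : R -> Prop)
  (HA : synaptic A pos) (p q c s u v k : R)
  (Hp : projA A p) (Hq : projA A q) (Hgen : generic A pos p q)
  (Hc : is_sqrt pos (p * q * p + perp p * perp q * perp p) c)
  (Hs : is_sqrt pos (p * perp q * p + perp p * q * perp p) s)
  (Hu : is_polar_sym A pos (p - perp q) u)
  (Hv : is_polar_sym A pos (p - q) v)
  (Hk : is_polar_sym A pos (p * q * perp p + perp p * q * p) k) :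
  let j := u * v * p + p * v * u in
  (is_carrier A c 1 /\ is_carrier A s 1 /\ is_carrier A (c * s) 1 /\
   is_carrier A (c * s * j) 1) /\
  u * v + v * u = 0 /\ j = k.
Proof.
move=> j; have jdef : j = u * v * p + p * v * u by []; clearbody j.
have [Ap pp] := Hp; have [Aq qq] := Hq.
have [Hg1 [Hg2 [Hg3 Hg4]]] := Hgen.
have [pc cc] := Hc; have [ps ss] := Hs.
rewrite /perp in cc ss Hu Hk.
have Ac := posA HA pc; have As := posA HA ps.
have HA1 := A1 HA.
have A1p : A (1 - p) := AB HA HA1 Ap.
have A1q : A (1 - q) := AB HA HA1 Aq.
have xpp : forall x, x * p * p = x * p by move=> x; rewrite -mulrA pp.
have xqq : forall x, x * q * q = x * q by move=> x; rewrite -mulrA qq.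
have pp' : (1 - p) * (1 - p) = 1 - p by ex; rewrite ?(pp, qq, xpp, xqq); zmod.
have qq' : (1 - q) * (1 - q) = 1 - q by ex; rewrite ?(pp, qq, xpp, xqq); zmod.
have Hp' : projA A (1 - p) by split.
have Hq' : projA A (1 - q) by split.
have splitx : forall x : R, x = p * x + (1 - p) * x by move=> x; ex; zmod.
have cc_inj : forall x, A x -> c * c * x = 0 -> x = 0.
  move=> x Ax h.
  have e1 : p * (c * c * x) = p * q * p * x.
    by rewrite cc; ex; rewrite ?(pp, qq, xpp, xqq); zmod.
  have e2 : (1 - p) * (c * c * x) = (1 - p) * (1 - q) * (1 - p) * x.
    by rewrite cc; ex; rewrite ?(pp, qq, xpp, xqq); zmod.
  rewrite h mulr0 in e1; rewrite h mulr0 in e2.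
  have h1 := meet_kill HA Hp Hq Hg2 erefl Ax (esym e1).
  have hq : q = 1 - (1 - q) by zmod.
  have h2 := meet_kill HA Hp' Hq' Hg3 hq Ax (esym e2).
  by rewrite (splitx x) h1 h2 addr0.
have ss_inj : forall x, A x -> s * s * x = 0 -> x = 0.
  move=> x Ax h.
  have e1 : p * (s * s * x) = p * (1 - q) * p * x.
    by rewrite ss; ex; rewrite ?(pp, qq, xpp, xqq); zmod.
  have e2 : (1 - p) * (s * s * x) = (1 - p) * q * (1 - p) * x.
    by rewrite ss; ex; rewrite ?(pp, qq, xpp, xqq); zmod.
  rewrite h mulr0 in e1; rewrite h mulr0 in e2.
  have hq : q = 1 - (1 - q) by zmod.
  have h1 := meet_kill HA Hp Hq' Hg1 hq Ax (esym e1).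
  have h2 := meet_kill HA Hp' Hq Hg4 erefl Ax (esym e2).
  by rewrite (splitx x) h1 h2 addr0.
have c_inj : forall x, A x -> c * x = 0 -> x = 0.
  by move=> x Ax h; apply: cc_inj => //; rewrite -mulrA h mulr0.
have s_inj : forall x, A x -> s * x = 0 -> x = 0.
  by move=> x Ax h; apply: ss_inj => //; rewrite -mulrA h mulr0.
have [a adef] : exists a, a = p - (1 - q) by eexists.
have [b bdef] : exists b, b = p - q by eexists.
rewrite -adef in Hu; rewrite -bdef in Hv.
have Aa : A a by rewrite adef; apply: (AB HA).
have Ab : A b by rewrite bdef; apply: (AB HA).
have aa : a * a = c * c by rewrite adef cc; ex; rewrite ?(pp, qq, xpp, xqq); zmod.
have bb : b * b = s * s by rewrite bdef ss; ex; rewrite ?(pp, qq, xpp, xqq); zmod.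
have a_inj : forall y, A y -> a * y = 0 -> y = 0.
  by move=> y Ay h; apply: cc_inj => //; rewrite -aa -mulrA h mulr0.
have b_inj : forall y, A y -> b * y = 0 -> y = 0.
  by move=> y Ay h; apply: ss_inj => //; rewrite -bb -mulrA h mulr0.
have [ra [pra rara aeq1 aeq2 [uu Au bu]]] := polar_inj HA a_inj Hu.
have [rb [prb rbrb beq1 beq2 [vv Av bv]]] := polar_inj HA b_inj Hv.
have rac : ra = c by apply: (sqrt_unique HA pra pc); rewrite rara aa.
have rbs : rb = s by apply: (sqrt_unique HA prb ps); rewrite rbrb bb.
subst ra rb.
have ccp : c * c * p = p * (c * c) by rewrite cc; ex; rewrite ?(pp, qq, xpp, xqq); zmod.
have ccq : c * c * q = q * (c * c) by rewrite cc; ex; rewrite ?(pp, qq, xpp, xqq); zmod.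
have ss1 : s * s = 1 - c * c by rewrite ss cc; ex; rewrite ?(pp, qq, xpp, xqq); zmod.
have cp : c * p = p * c by apply: (root_comm HA pc Ap).
have cq : c * q = q * c by apply: (root_comm HA pc Aq).
have sp : s * p = p * s.
  by apply: (root_comm HA ps Ap); rewrite ss1 mulrBl mulrBr mul1r mulr1 ccp.
have sq : s * q = q * s.
  by apply: (root_comm HA ps Aq); rewrite ss1 mulrBl mulrBr mul1r mulr1 ccq.
have scc : s * (c * c) = (c * c) * s.
  apply: (root_comm HA ps (Asq HA Ac)).
  by rewrite ss1 mulrBl mulrBr mul1r mulr1 mulrA.
have cs : c * s = s * c by apply: (root_comm HA pc As); rewrite scc.
have ca : a * c = c * a.
  by rewrite adef; apply: commB; [exact: (esym cp)|apply: commB; [exact: comm1|exact: (esym cq)]].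
have cb : b * c = c * b by rewrite bdef; apply: commB; exact: esym.
have sa : a * s = s * a.
  by rewrite adef; apply: commB; [exact: (esym sp)|apply: commB; [exact: comm1|exact: (esym sq)]].
have sb : b * s = s * b by rewrite bdef; apply: commB; exact: esym.
have cu : c * u = u * c by rewrite -aeq1 -aeq2.
have sv : s * v = v * s by rewrite -beq1 -beq2.
have us : u * s = s * u by apply: bu.2; split => //.
have vc : v * c = c * v by apply: bv.2; split => //; rewrite cb.
have ab0 : a * b + b * a = 0 by rewrite adef bdef; ex; rewrite ?(pp, qq, xpp, xqq); zmod.
have bu0 : b * u + u * b = 0.
  apply: c_inj; first exact: (Ajord HA Ab Au).
  rewrite mulrDr !mulrA -cb -(mulrA b c u) -aeq1.
  by rewrite addrC ab0.
have uv0 : u * v + v * u = 0.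
  apply: s_inj; first exact: (Ajord HA Au Av).
  rewrite mulrDr !mulrA -us -(mulrA u s v) -beq1.
  by rewrite addrC bu0.
have apa : a * p * a = a * a * q by rewrite adef; ex; rewrite ?(pp, qq, xpp, xqq); zmod.
have bpb : b * p * b = b * b * (1 - q) by rewrite bdef; ex; rewrite ?(pp, qq, xpp, xqq); zmod.
have Aupu : A (u * p * u) := Axyx HA Au Ap.
have Avpv : A (v * p * v) := Axyx HA Av Ap.
have upu : u * p * u = q.
  have cX : (u * p * u) * c = c * (u * p * u).
    by apply: commM; [apply: commM|]; rewrite // -cu.
  have e1 : c * c * (u * p * u) = a * p * a.
    by rewrite -mulrA -cX {1}aeq1 {1}aeq2 !mulrA.
  apply/subr0_eq/cc_inj; first exact: (AB HA).
  by rewrite mulrBr e1 apa aa subrr.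
have vpv : v * p * v = 1 - q.
  have sX : (v * p * v) * s = s * (v * p * v).
    by apply: commM; [apply: commM|]; rewrite // -?sv // sp.
  have e1 : s * s * (v * p * v) = b * p * b.
    by rewrite -mulrA -sX {1}beq1 {1}beq2 !mulrA.
  apply/subr0_eq/ss_inj; first exact: (AB HA).
  by rewrite mulrBr e1 bpb bb subrr.
have vu : v * u = - (u * v) by apply/eqP; rewrite -addr_eq0 addrC uv0.
have uqu : u * q * u = p by rewrite -upu !mulrA uu mul1r -mulrA uu mulr1.
have np : (1 - p) * p = 0 by rewrite mulrBl mul1r pp subrr.
have pn : p * (1 - p) = 0 by rewrite mulrBr mulr1 pp subrr.
have jc : j * c = c * j.
  rewrite jdef; apply: commD; apply: commM; try apply: commM; by rewrite // cp.
have js : j * s = s * j.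
  rewrite jdef; apply: commD; apply: commM; try apply: commM; by rewrite // -?sv // sp.
have Aj : A j by rewrite jdef; apply: (Atrip HA).
have [W Wdef] : exists W, W = u * v by eexists.
have ww : W * W = -1.
  by rewrite Wdef -mulrA (mulrA v u v) vu mulNr mulrN -(mulrA u v v) vv mulr1 uu.
have wpw : W * p * (v * u) = 1 - p.
  have -> : W * p * (v * u) = u * (v * p * v) * u by rewrite Wdef !mulrA.
  by rewrite vpv mulrBr mulrBl mulr1 uu uqu.
have vuuv : v * u * W = 1 by rewrite Wdef -mulrA (mulrA u u v) uu mul1r vv.
have wp : W * p = (1 - p) * W by rewrite -wpw -(mulrA (W * p) (v * u) W) vuuv mulr1.
have pw : p * W = W * (1 - p) by rewrite mulrBr mulr1 wp mulrBl mul1r; zmod.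
have jw : j = W * p - p * W by rewrite jdef Wdef -(mulrA p v u) vu mulrN.
have jj : j * j = 1.
  have t1 : W * p * (W * p) = 0.
    by rewrite -mulrA (mulrA p W p) pw -(mulrA W (1 - p) p) np !mulr0.
  have t2 : W * p * (p * W) = - (1 - p).
    by rewrite -mulrA (mulrA p p W) pp pw mulrA ww mulN1r.
  have t3 : p * W * (W * p) = - p.
    by rewrite mulrA -(mulrA p W W) ww mulrN1 mulNr pp.
  have t4 : p * W * (p * W) = 0.
    by rewrite mulrA -(mulrA p W p) wp mulrA pn !mul0r.
  by rewrite jw mulrBl !mulrBr t1 t2 t3 t4; zmod.
have [m mdef] : exists m, m = p * q * (1 - p) + (1 - p) * q * p by eexists.
rewrite -mdef in Hk.
have abpm : a * b * p + p * (b * a) = m.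
  by rewrite adef bdef mdef; ex; rewrite ?(pp, qq, xpp, xqq); zmod.
have csv : (s * v) * c = c * (s * v) by apply: commM; [exact: (esym cs)|exact: vc].
have e1 : c * s * (u * v * p) = a * b * p.
  by rewrite aeq1 beq1 !mulrA -(mulrA c s u) -us !mulrA.
have e2 : c * s * (p * v * u) = p * (b * a).
  have cX : (p * (s * v)) * c = c * (p * (s * v)) by apply: commM; [exact: (esym cp)|exact: csv].
  rewrite aeq1 beq1 [RHS]mulrA [RHS]mulrA cX.
  by rewrite !mulrA -(mulrA c s p) sp !mulrA.
have csj : c * s * j = m by rewrite jdef mulrDr e1 e2 abpm.
have jcs : (c * s) * j = j * (c * s) by apply: commM; exact: esym.
have mm : m * m = (c * s) * (c * s) by rewrite -csj sq_comm // esym.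
have pcs := pos_mulC HA pc ps cs.
have cs_inj : forall x, A x -> c * s * x = 0 -> x = 0.
  move=> x Ax h.
  pose y := s * (x * x) * s.
  have Ay : A y := Axyx HA As (Asq HA Ax).
  have py : pos y := sa_aba HA ps (sa_sq HA Ax).
  have h1 : c * y * c = 0.
    have -> : c * y * c = (c * s * x) * (x * s * c) by rewrite /y !mulrA.
    by rewrite h mul0r.
  have [h2 _] := sa_aba0 HA Ac py h1.
  have y0 := c_inj _ Ay h2.
  have : (x * s * x) * (x * s * x) = 0.
    have -> : (x * s * x) * (x * s * x) = x * y * x by rewrite /y !mulrA.
    by rewrite y0 mulr0 !mul0r.
  move/(sq0 HA (Axyx HA Ax As)) => xsx.
  have [_ sx] := sa_aba0 HA Ax ps xsx.
  exact: s_inj.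
have csj_inj : forall x, A x -> c * s * j * x = 0 -> x = 0.
  move=> x Ax h; apply: cs_inj => //.
  have <- : j * (c * s * j * x) = c * s * x.
    by rewrite mulrA (mulrA j (c * s) j) -jcs -(mulrA (c * s) j j) jj mulr1.
  by rewrite h mulr0.
have m_inj : forall y, A y -> m * y = 0 -> y = 0 by move=> y Ay; rewrite -csj; exact: csj_inj.
have [rm [prm rmrm meq1 meq2 [kk Ak bk]]] := polar_inj HA m_inj Hk.
have rmcs : rm = c * s by apply: (sqrt_unique HA prm pcs); rewrite rmrm mm.
subst rm.
have jk : j = k.
  apply/esym/subr0_eq/cs_inj; first exact: (AB HA).
  by rewrite mulrBr -meq1 csj subrr.
have car : forall z, (forall x, A x -> z * x = 0 -> x = 0) -> is_carrier A z 1.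
  move=> z zi; split; first by split => //; rewrite mulr1.
  move=> y Ay; split => [h|]; first by rewrite mul1r; exact: zi.
  by rewrite mul1r => ->; rewrite mulr0.
split; last by split.
by split; [exact: car|split; [exact: car|split; exact: car]].
Qed.
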